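(* Let $s\ge1$, $n\ge1$ be integers and $J>0$. The ground space of $H=H_n^s+H_n^J$ is the span of the product states $\{|{\bf t}\rangle:{\bf t}\in T_n\}$ (each of which is the uniform superposition over its own equivalence class, a singleton), and it has dimension $|T_n|$.
   Context: Let $\Sigma=\{-s,\dots,s\}$, $\Sigma_*=\Sigma\setminus\{0\}$. The spin chain on $n$ sites has local space $\mathbb{C}^{2s+1}$ with basis $\{|j\rangle:j\in\Sigma\}$ and $|{\bf t}\rangle=|t_1\rangle\otimes\cdots\otimes|t_n\rangle$. For $m\in\Sigma_*$, $P^m=|\phi_m\rangle\langle\phi_m|$ with $|\phi_m\rangle=\frac1{\sqrt2}(|0,m\rangle-|m,0\rangle)$; for $m\in\{1,\dots,s\}$, $Q^m=|\chi_m\rangle\langle\chi_m|$ with $|\chi_m\rangle=\frac1{\sqrt2}(|0,0\rangle-|m,-m\rangle)$, acting on two neighboring spins. $H_n^s=\sum_{k=1}^{n-1}\big(\sum_{m\in\Sigma_*}P^m_{k,k+1}+\sum_{m=1}^sQ^m_{k,k+1}\big)$ and $H_n^J=J\sum_{k=1}^n(|0\rangle\langle0|)_k$. $T_n\subseteq\Sigma_*^n$ is the set of strings $t_1\cdots t_n$ with no index $j$ such that $t_j=m\in\{1,\dots,s\}$ and $t_{j+1}=-m$. Equivalence of strings in $\Sigma^n$ is generated by the local moves $(0,m)\leftrightarrow(m,0)$ for $m\in\Sigma_*$ and $(0,0)\leftrightarrow(m,-m)$ for $m\in\{1,\dots,s\}$ on adjacent positions. *)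

(* Defs.v *)
From HB Require Import structures.
From mathcomp Require Import all_boot all_order all_algebra all_field.
Set Implicit Arguments. Unset Strict Implicit. Unset Printing Implicit Defensive.
Import Order.TTheory GRing.Theory Num.Theory.
Local Open Scope ring_scope.

(* Local spin states: Sigma = {-s..s}, encoded by 'I_(2s+1), a |-> a - s. *)
Definition site (s : nat) := 'I_(s.*2.+1).
Definition sp (s : nat) (a : 'I_(s.*2.+1)) : int := (a : nat)%:Z - s%:Z.

Definition config (s n : nat) := (n.-tuple 'I_(s.*2.+1)).
Definition at_ (s n : nat) (x : n.-tuple 'I_(s.*2.+1)) (j : nat) : 'I_(s.*2.+1) :=
  nth ord0 (val x) j.

Definition phi_amp (s : nat) (m : int) (a b : 'I_(s.*2.+1)) : algC :=
  (sqrtC 2)^-1 * (((sp a == 0) && (sp b == m))%:R - ((sp a == m) && (sp b == 0))%:R).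
Definition chi_amp (s : nat) (m : int) (a b : 'I_(s.*2.+1)) : algC :=
  (sqrtC 2)^-1 * (((sp a == 0) && (sp b == 0))%:R - ((sp a == m) && (sp b == - m))%:R).

(* two-site matrix element <a b| (sum_{m in Sigma_*} P^m + sum_{m=1}^s Q^m) |c d> *)
Definition h2 (s : nat) (a b c d : 'I_(s.*2.+1)) : algC :=
  \sum_(i : 'I_(s.*2.+1) | sp i != 0) phi_amp (sp i) a b * (phi_amp (sp i) c d)^*
  + \sum_(i : 'I_(s.*2.+1) | 0 < sp i) chi_amp (sp i) a b * (chi_amp (sp i) c d)^*.

(* x and y agree outside the sites k, k+1 (0-based) *)
Definition agree_off (s n : nat) (x y : n.-tuple 'I_(s.*2.+1)) (k : nat) : bool :=
  [forall j : 'I_n, ((j : nat) != k) && ((j : nat) != k.+1) ==> (at_ x j == at_ y j)].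

Definition Hs_elt (s n : nat) (x y : n.-tuple 'I_(s.*2.+1)) : algC :=
  \sum_(k < n.-1) (agree_off x y k)%:R *
     h2 (at_ x k) (at_ x k.+1) (at_ y k) (at_ y k.+1).

Definition HJ_elt (s n : nat) (J : algC) (x y : n.-tuple 'I_(s.*2.+1)) : algC :=
  J * (x == y)%:R * \sum_(k < n) (sp (at_ x k) == 0)%:R.

Definition Hmat (s n : nat) (J : algC) : 'M[algC]_(#|{: n.-tuple 'I_(s.*2.+1)}|) :=
  \matrix_(i, j) (Hs_elt (enum_val i) (enum_val j) + HJ_elt J (enum_val i) (enum_val j)).

(* MathComp's eigenspaces use row vectors (v *m A = a v).  A ket sum_j v_j |e_j>
   is encoded as the row vector v; H acts on it as v |-> v *m (Hmat)^T. *)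
Definition Hop (s n : nat) (J : algC) := (Hmat s n J)^T.

Definition ket (s n : nat) (t : n.-tuple 'I_(s.*2.+1)) : 'rV[algC]_(#|{: n.-tuple 'I_(s.*2.+1)}|) :=
  delta_mx 0 (enum_rank t).

Definition ground_energy (N : nat) (A : 'M[algC]_N) (E : algC) : Prop :=
  eigenvalue A E /\ forall e, eigenvalue A e -> E <= e.

Definition Tn (s n : nat) (t : n.-tuple 'I_(s.*2.+1)) : bool :=
  [forall k : 'I_n, sp (at_ t k) != 0] &&
  [forall k : 'I_n, ~~ [&& (0 < sp (at_ t k)), (k.+1 < n)%N & (sp (at_ t k.+1) == - sp (at_ t k))]].

Definition move (s : nat) (a b c d : 'I_(s.*2.+1)) : bool :=
  [|| [&& sp a == 0, sp d == 0, sp b == sp c & sp b != 0],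
      [&& sp b == 0, sp c == 0, sp a == sp d & sp a != 0],
      [&& sp a == 0, sp b == 0, 0 < sp c & sp d == - sp c]
    | [&& sp c == 0, sp d == 0, 0 < sp a & sp b == - sp a]].

Definition step (s n : nat) (x y : n.-tuple 'I_(s.*2.+1)) : bool :=
  [exists k : 'I_n, [&& (k.+1 < n)%N, agree_off x y k &
      move (at_ x k) (at_ x k.+1) (at_ y k) (at_ y k.+1)]].

Definition equiv_str (s n : nat) (x y : n.-tuple 'I_(s.*2.+1)) : bool :=
  connect (@step s n) x y.

(* Main.v *)
Require Import Defs.
From HB Require Import structures.
From mathcomp Require Import all_boot all_order all_algebra all_field.
Import Order.TTheory GRing.Theory Num.Theory.
From mathcomp Require Import ring zify.
Local Open Scope ring_scope.


Lemma Tn_nz s n (t : n.-tuple 'I_(s.*2.+1)) (k : nat) :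
  Tn t -> (k < n)%N -> sp (at_ t k) != 0.
Proof. by case/andP=> /forallP H _ kn; exact: (H (Ordinal kn)). Qed.

Lemma Tn_nopair s n (t : n.-tuple 'I_(s.*2.+1)) (k : nat) :
  Tn t -> (k.+1 < n)%N -> 0 < sp (at_ t k) -> sp (at_ t k.+1) != - sp (at_ t k).
Proof.
case/andP=> _ /forallP H kn pos.
have kn' : (k < n)%N by apply: ltnW.
move: (H (Ordinal kn')) => /=; rewrite pos kn /=. by [].
Qed.

Lemma no_step s n (t u : n.-tuple 'I_(s.*2.+1)) : Tn t -> ~~ step t u.
Proof.
move=> Ht; apply/existsP=> -[k /and3P[kn _ mv]].
have kn' : (k < n)%N by apply: ltnW.
have h0 := @Tn_nz _ _ t k Ht kn'; have h1 := @Tn_nz _ _ t k.+1 Ht kn.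
move: mv; rewrite /move (negbTE h0) (negbTE h1) /=.
case/and4P=> _ _ pos /eqP e.
by move: (@Tn_nopair _ _ t k Ht kn pos); rewrite e eqxx.
Qed.

Lemma part3 s n (t u : n.-tuple 'I_(s.*2.+1)) : Tn t -> equiv_str t u -> u = t.
Proof.
move=> Ht /connectP[[|y p] /= P ->] //.
by case/andP: P => st _; move: (@no_step _ _ t y Ht); rewrite st.
Qed.


Lemma h2_zero s (a b c d : 'I_(s.*2.+1)) :
  sp c != 0 -> sp d != 0 -> ~~ ((0 < sp c) && (sp d == - sp c)) -> h2 a b c d = 0.
Proof.
move=> hc hd hp; rewrite /h2 big1 ?big1 ?addr0 // => i Hi.
  rewrite /chi_amp (negbTE hc) /=.
  have -> : (sp c == sp i) && (sp d == - sp i) = false.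
    apply/negP=> /andP[/eqP e1 /eqP e2]; move: hp; by rewrite e1 Hi e2 eqxx.
  by rewrite subrr mulr0 conjC0 mulr0.
by rewrite /phi_amp (negbTE hc) (negbTE hd) !andbF subrr mulr0 conjC0 mulr0.
Qed.

Lemma H_ket_zero s n (J : algC) (t : n.-tuple 'I_(s.*2.+1)) :
  Tn t -> ket t *m Hop s n J = 0.
Proof.
move=> Ht; rewrite /ket -rowE; apply/rowP=> j; rewrite !mxE enum_rankK.
rewrite /Hs_elt big1 ?add0r; last first.
  move=> k _; have kn : (k.+1 < n)%N by have := ltn_ord k; rewrite -ltn_predRL; lia.
  rewrite h2_zero ?mulr0 //.
  - exact: (@Tn_nz _ _ t k Ht (ltnW kn)).
  - exact: (@Tn_nz _ _ t k.+1 Ht kn).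
  - by apply/negP=> /andP[pos /eqP e]; move: (@Tn_nopair _ _ t k Ht kn pos); rewrite e eqxx.
rewrite /HJ_elt; case: eqP => [->|_]; last by rewrite mulr0 mul0r.
rewrite big1 ?mulr0 // => k _.
by rewrite (negbTE (@Tn_nz _ _ t k Ht (ltn_ord k))).
Qed.


Lemma gram (T K : finType) (pi : T -> K) (g : T -> algC) :
  \sum_x \sum_y (pi x == pi y)%:R * ((g x)^* * g y) =
  \sum_r (\sum_(x | pi x == r) g x)^* * (\sum_(y | pi y == r) g y).
Proof.
transitivity (\sum_r \sum_(x | pi x == r) (g x)^* * \sum_(y | pi y == pi x) g y); last first.
  apply: eq_bigr => r _; rewrite rmorph_sum big_distrl /=.
  by apply: eq_bigr => x /eqP ->.
under [RHS]eq_bigr => r _ do rewrite big_mkcond /=.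
rewrite [RHS]exchange_big /=.
apply: eq_bigr => x _; rewrite -big_mkcond /= (big_pred1 (pi x)); last by move=> r; rewrite /= eq_sym.

rewrite big_distrr /= [RHS]big_mkcond /=; apply: eq_bigr => y _; rewrite eq_sym; case: eqP => _; by rewrite ?mul1r ?mul0r.
Qed.

Lemma gram_ge0 (T K : finType) (pi : T -> K) (g : T -> algC) :
  0 <= \sum_x \sum_y (pi x == pi y)%:R * ((g x)^* * g y).
Proof. rewrite gram; apply: sumr_ge0 => r _; rewrite mulrC; exact: mul_conjC_ge0. Qed.

Lemma gram_eq0 (T K : finType) (pi : T -> K) (g : T -> algC) :
  \sum_x \sum_y (pi x == pi y)%:R * ((g x)^* * g y) = 0 ->
  forall r, \sum_(x | pi x == r) g x = 0.
Proof.
rewrite gram => H r; apply/eqP; rewrite -mul_conjC_eq0 mulrC; apply/eqP.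
by apply: (psumr_eq0P _ H) => // i _; rewrite mulrC mul_conjC_ge0.
Qed.

Lemma qsum (T I : finType) (P : pred I) (G : I -> T -> T -> algC) (V : T -> algC) :
  \sum_x \sum_y (V x)^* * (\sum_(k | P k) G k x y) * V y =
  \sum_(k | P k) \sum_x \sum_y (V x)^* * G k x y * V y.
Proof.
rewrite [RHS]exchange_big; apply: eq_bigr => x _ /=.
rewrite [RHS]exchange_big; apply: eq_bigr => y _ /=.
by rewrite big_distrr big_distrl.
Qed.

Lemma qadd (T : finType) (A B : T -> T -> algC) (V : T -> algC) :
  \sum_x \sum_y (V x)^* * (A x y + B x y) * V y =
  \sum_x \sum_y (V x)^* * A x y * V y + \sum_x \sum_y (V x)^* * B x y * V y.
Proof.
rewrite -big_split; apply: eq_bigr => x _ /=; rewrite -big_split; apply: eq_bigr => y _ /=.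
by rewrite mulrDr mulrDl.
Qed.

Lemma qterm (T : finType) (a : algC) (f : T -> algC) (V : T -> algC) x y :
  (V x)^* * (a * (f x * (f y)^*)) * V y = a * (((f x)^* * V x)^* * ((f y)^* * V y)).
Proof. rewrite rmorphM /= conjCK; ring. Qed.


Definition VV s n (v : 'rV[algC]_(#|{: n.-tuple 'I_(s.*2.+1)}|)) (x : n.-tuple 'I_(s.*2.+1)) : algC :=
  v 0 (enum_rank x).
Arguments VV {s n}.

Lemma sum_rank s n (F : 'I_(#|{: n.-tuple 'I_(s.*2.+1)}|) -> algC) :
  \sum_i F i = \sum_(x : n.-tuple 'I_(s.*2.+1)) F (enum_rank x).
Proof.
rewrite (reindex enum_rank) //; exists enum_val => x _; [exact: enum_rankK | exact: enum_valK].
Qed.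

Lemma qf_expand s n J (v : 'rV[algC]_(#|{: n.-tuple 'I_(s.*2.+1)}|)) :
  \sum_i (v 0 i)^* * (v *m Hop s n J) 0 i =
  \sum_x \sum_y (VV v x)^* * (Hs_elt x y + HJ_elt J x y) * VV v y.
Proof.
rewrite sum_rank; apply: eq_bigr => x _; rewrite mxE big_distrr sum_rank /=.
apply: eq_bigr => y _; rewrite !mxE !enum_rankK /VV; ring.
Qed.

Definition pik s n (k : nat) (x : n.-tuple 'I_(s.*2.+1)) : n.-tuple 'I_(s.*2.+1) :=
  [tuple (if ((i : nat) == k) || ((i : nat) == k.+1) then ord0 else tnth x i) | i < n].
Arguments pik {s n}.

Lemma at_tnth s n (x : n.-tuple 'I_(s.*2.+1)) (i : 'I_n) : at_ x i = tnth x i.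
Proof. by rewrite /at_ (tnth_nth ord0). Qed.

Lemma ag_pi s n (x y : n.-tuple 'I_(s.*2.+1)) k :
  agree_off x y k = (pik k x == pik k y).
Proof.
apply/forallP/eqP => [H|H].
  apply: eq_from_tnth => i; rewrite !tnth_mktuple; case: ifP => // /norP[h1 h2].
  by move: (H i); rewrite h1 h2 /= !at_tnth => /eqP.
move=> i; apply/implyP => /andP[h1 h2].
move: (congr1 (fun t => tnth t i) H); rewrite !tnth_mktuple (negbTE h1) (negbTE h2) /=.
by rewrite !at_tnth => ->.
Qed.

Definition Qk s n (k : nat) (f : 'I_(s.*2.+1) -> 'I_(s.*2.+1) -> algC)
   (V : n.-tuple 'I_(s.*2.+1) -> algC) : algC :=
  \sum_x \sum_y (pik k x == pik k y)%:R *
     (((f (at_ x k) (at_ x k.+1))^* * V x)^* * ((f (at_ y k) (at_ y k.+1))^* * V y)).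
Arguments Qk {s n}.

Definition zc s n (x : n.-tuple 'I_(s.*2.+1)) : algC := \sum_(k < n) (sp (at_ x k) == 0)%:R.
Arguments zc {s n}.

Lemma qf_decomp s n J (V : n.-tuple 'I_(s.*2.+1) -> algC) :
  \sum_x \sum_y (V x)^* * (Hs_elt x y + HJ_elt J x y) * V y =
  \sum_(k < n.-1) (\sum_(i : 'I_(s.*2.+1) | sp i != 0) Qk k (phi_amp (sp i)) V
                 + \sum_(i : 'I_(s.*2.+1) | 0 < sp i) Qk k (chi_amp (sp i)) V)
  + \sum_x J * zc x * (V x * (V x)^*).
Proof.
rewrite qadd; congr (_ + _).
  rewrite /Hs_elt qsum; apply: eq_bigr => k _.
  rewrite /h2; under eq_bigr => x _ do under eq_bigr => y _ do rewrite mulrDr.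
  rewrite qadd; congr (_ + _).
    under eq_bigr => x _ do under eq_bigr => y _ do rewrite mulr_sumr.
    rewrite qsum; apply: eq_bigr => i _; rewrite /Qk.
    apply: eq_bigr => x _; apply: eq_bigr => y _; rewrite ag_pi; exact: (qterm _ _ (fun z : n.-tuple _ => phi_amp (sp i) (at_ z k) (at_ z k.+1))).
  under eq_bigr => x _ do under eq_bigr => y _ do rewrite mulr_sumr.
  rewrite qsum; apply: eq_bigr => i _; rewrite /Qk.
  apply: eq_bigr => x _; apply: eq_bigr => y _; rewrite ag_pi; exact: (qterm _ _ (fun z : n.-tuple _ => chi_amp (sp i) (at_ z k) (at_ z k.+1))).
apply: eq_bigr => x _; rewrite (bigD1 x) //= big1 ?addr0.
  rewrite /HJ_elt eqxx /zc mulr1; set S := (\sum_(k < n) _); set a := V x; set b := (a^*); clearbody S b a; rewrite /= in S b a *; ring.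
by move=> y ny; rewrite eq_sym in ny; rewrite /HJ_elt (negbTE ny) mulr0 !mul0r mulr0 mul0r.
Qed.


Lemma zc_ge0 s n (x : n.-tuple 'I_(s.*2.+1)) : 0 <= zc x.
Proof. by apply: sumr_ge0 => k _; rewrite ler0n. Qed.

Lemma Qk_ge0 s n k (f : 'I_(s.*2.+1) -> 'I_(s.*2.+1) -> algC) (V : n.-tuple 'I_(s.*2.+1) -> algC) :
  0 <= Qk k f V.
Proof. exact: gram_ge0. Qed.

Lemma sumA_ge0 s n (V : n.-tuple 'I_(s.*2.+1) -> algC) (k : nat) :
  0 <= \sum_(i : 'I_(s.*2.+1) | sp i != 0) Qk k (phi_amp (sp i)) V
                 + \sum_(i : 'I_(s.*2.+1) | 0 < sp i) Qk k (chi_amp (sp i)) V.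
Proof. by apply: addr_ge0; apply: sumr_ge0 => i _; apply: Qk_ge0. Qed.

Lemma sumB_ge0 s n J (V : n.-tuple 'I_(s.*2.+1) -> algC) : 0 <= J ->
  0 <= \sum_x J * zc x * (V x * (V x)^*).
Proof.
move=> J0; apply: sumr_ge0 => x _; apply: mulr_ge0; [apply: mulr_ge0 =>//; exact: zc_ge0 | exact: mul_conjC_ge0].
Qed.

Lemma qf_ge0 s n J (v : 'rV[algC]_(#|{: n.-tuple 'I_(s.*2.+1)}|)) : 0 <= J ->
  0 <= \sum_i (v 0 i)^* * (v *m Hop s n J) 0 i.
Proof.
move=> J0; rewrite qf_expand qf_decomp; apply: addr_ge0; last exact: sumB_ge0.
by apply: sumr_ge0 => k _; apply: sumA_ge0.
Qed.

Lemma eig_ge0 s n J e : 0 <= J -> eigenvalue (Hop s n J) e -> 0 <= e.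
Proof.
move=> J0 /eigenvalueP[v ve vn0].
have := @qf_ge0 s n J v J0; rewrite ve.
under eq_bigr => i _ do rewrite mxE mulrCA [_^* * _]mulrC.
rewrite -mulr_sumr pmulr_lge0 //.
rewrite lt_def sumr_ge0 ?andbT; last by move=> i _; rewrite mul_conjC_ge0.
apply: contra vn0 => /eqP H; apply/eqP/rowP => j; rewrite mxE.
apply/eqP; rewrite -mul_conjC_eq0; apply/eqP.
by apply: (psumr_eq0P _ H) => // i _; rewrite mul_conjC_ge0.
Qed.


Lemma pik_eq s n k (x y : n.-tuple 'I_(s.*2.+1)) :
  pik k x = pik k y -> at_ x k = at_ y k -> at_ x k.+1 = at_ y k.+1 -> x = y.
Proof.
move=> H h1 h2; apply: eq_from_tnth => i.
move: (congr1 (fun t => tnth t i) H); rewrite !tnth_mktuple.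
case: ifP => [/orP[/eqP e|/eqP e] _|_ //]; by rewrite -!at_tnth e.
Qed.

Lemma sp_inj s (a b : 'I_(s.*2.+1)) : sp a = sp b -> a = b.
Proof. by rewrite /sp => /addIr [] /val_inj. Qed.

Lemma kernel_supp s n J (v : 'rV[algC]_(#|{: n.-tuple 'I_(s.*2.+1)}|)) :
  0 < J -> v *m Hop s n J = 0 -> forall x, ~~ Tn x -> VV v x = 0.
Proof.
move=> J0 Hv.
have q0 : \sum_i (v 0 i)^* * (v *m Hop s n J) 0 i = 0.
  by rewrite Hv big1 // => i _; rewrite mxE mulr0.
move: q0; rewrite qf_expand qf_decomp => /eqP.
rewrite paddr_eq0; last by apply: sumB_ge0; apply: ltW.
  2: by apply: sumr_ge0 => k _; apply: sumA_ge0.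
case/andP=> /eqP HA /eqP HB.
have Z : forall x, [exists k : 'I_n, sp (at_ x k) == 0] -> VV v x = 0.
  move=> x /existsP[k hk].
  have nn : forall y : n.-tuple 'I_(s.*2.+1), true -> 0 <= J * zc y * (VV v y * (VV v y)^*).
    move=> y _; apply: mulr_ge0; [apply: mulr_ge0; [exact: ltW | exact: zc_ge0] | exact: mul_conjC_ge0].
  have zp : 0 < zc x.
    rewrite /zc (bigD1 k) //= hk; apply: (lt_le_trans (ltr01 : (0 : algC) < 1)).
    by rewrite lerDl; apply: sumr_ge0 => j _; rewrite ler0n.
  move: (psumr_eq0P nn HB (i:=x) isT) => /eqP.
  by rewrite !mulf_eq0 (gt_eqF J0) (gt_eqF zp) /= conjC_eq0 orbb => /eqP.
move=> x nT.
case: (boolP [exists k : 'I_n, sp (at_ x k) == 0]) => [|nz]; first by apply: Z.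
have nz' : forall k : 'I_n, sp (at_ x k) != 0.
  by move=> k; apply: contra nz => hk; apply/existsP; exists k.
have [k /and3P[pos kn e]] :
  exists k : 'I_n, [&& 0 < sp (at_ x k), (k.+1 < n)%N & sp (at_ x k.+1) == - sp (at_ x k)].
  move: nT; rewrite /Tn; have -> : [forall k : 'I_n, sp (at_ x k) != 0] by apply/forallP.
  by rewrite /= negb_forall => /existsP[k]; rewrite negbK; exists k.
have kk : (k < n.-1)%N by lia.
set i := at_ x k.
have HAk := psumr_eq0P (fun k _ => sumA_ge0 _ _ _ _) HA (i:=Ordinal kk) isT.
move: HAk => /= /eqP; rewrite paddr_eq0; last 2 first.
  - by apply: sumr_ge0 => j _; apply: Qk_ge0.
  - by apply: sumr_ge0 => j _; apply: Qk_ge0.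
case/andP=> _ /eqP HC.
have HQ := psumr_eq0P (fun j _ => Qk_ge0 _ _ _ _ _) HC (i:=i) pos.
have := gram_eq0 _ _ (pik k) (fun y : n.-tuple _ => (chi_amp (sp i) (at_ y k) (at_ y k.+1))^* * VV v y) HQ (pik k x).
rewrite (bigD1 x) //= big1 ?addr0.
  rewrite /chi_amp (negbTE (nz' k)) /= /i eqxx e /= sub0r mulrN1 rmorphN /=.
  move/eqP; rewrite mulf_eq0 oppr_eq0 conjC_eq0 invr_eq0 sqrtC_eq0 /=.
  by rewrite pnatr_eq0 /= => /eqP.
move=> y /andP[/eqP py nyx].
case: (boolP [exists k : 'I_n, sp (at_ y k) == 0]) => [/Z ->|nzy]; first by rewrite mulr0.
have nzk : sp (at_ y k) != 0 by apply: contra nzy => hk; apply/existsP; exists k.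
rewrite /chi_amp (negbTE nzk) /=.
case: (boolP ((sp (at_ y k) == sp i) && (sp (at_ y k.+1) == - sp i))) => [/andP[/eqP e1 /eqP e2]|_].
  have ee : x = y.
    apply: (pik_eq _ _ _ _ _ (esym py)); first by apply: sp_inj; rewrite e1.
    by apply: sp_inj; rewrite e2 (eqP e).
  by move: nyx; rewrite ee eqxx.
by rewrite subrr mulr0 conjC0 mul0r.
Qed.


Lemma sum_rankM s n m (F : 'I_(#|{: n.-tuple 'I_(s.*2.+1)}|) -> 'rV[algC]_m) :
  \sum_i F i = \sum_(x : n.-tuple 'I_(s.*2.+1)) F (enum_rank x).
Proof.
rewrite (reindex enum_rank) //; exists enum_val => x _; [exact: enum_rankK | exact: enum_valK].
Qed.

Lemma ket_nz s n (t : n.-tuple 'I_(s.*2.+1)) : ket t != 0.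
Proof.
apply/eqP => /matrixP /(_ 0 (enum_rank t)); rewrite !mxE !eqxx /= => /eqP.
by rewrite oner_eq0.
Qed.

Lemma Tn_exists s n : (1 <= s)%N -> exists t : n.-tuple 'I_(s.*2.+1), Tn t.
Proof.
move=> s1; have h : (s.+1 < s.*2.+1)%N by rewrite -addnn; lia.
set i1 := Ordinal h.
have sp1 : sp i1 = 1 by rewrite /sp /= -addn1 PoszD addrAC subrr add0r.
have at1 : forall k, (k < n)%N -> at_ [tuple of nseq n i1] k = i1.
  by move=> k kn; rewrite /at_ /= nth_nseq kn.
exists [tuple of nseq n i1]; apply/andP; split; apply/forallP => k.
  by rewrite at1 // sp1.
apply/negP => /and3P[_ kn /eqP]; rewrite !at1 ?sp1 //; exact: ltnW.
Qed.

Lemma eig0 s n J : (1 <= s)%N -> eigenvalue (Hop s n J) 0.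
Proof.
move=> s1; have [t Ht] := @Tn_exists s n s1.
apply/eigenvalueP; exists (ket t); last exact: ket_nz.
by rewrite scale0r H_ket_zero.
Qed.

Lemma ground0 s n J E : (1 <= s)%N -> 0 < J -> ground_energy (Hop s n J) E -> E = 0.
Proof.
move=> s1 J0 [eE H]; apply/eqP; rewrite eq_le H ?eig0 //=.
exact: (eig_ge0 _ _ _ _ (ltW J0) eE).
Qed.

Lemma eigsp s n J : 0 < J ->
  (eigenspace (Hop s n J) 0 == \sum_(t | Tn t) <<ket t>>)%MS.
Proof.
move=> J0; apply/andP; split.
  apply/rV_subP => v /eigenspaceP; rewrite scale0r => Hv.
  rewrite (row_sum_delta v) sum_rankM; apply: summx_sub => x _.
  case: (boolP (Tn x)) => Hx.
    apply: scalemx_sub; apply: (sumsmx_sup x) => //; rewrite genmxE; exact: submx_refl.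
  have := kernel_supp _ _ _ _ J0 Hv x Hx; rewrite /VV => ->; rewrite scale0r; exact: sub0mx.
apply/sumsmx_subP => t Ht; rewrite genmxE; apply/eigenspaceP.
by rewrite scale0r H_ket_zero.
Qed.

Lemma rank_sum s n :
  \rank (\sum_(t : n.-tuple 'I_(s.*2.+1) | Tn t) <<ket t>>)%MS = #|[pred t : n.-tuple 'I_(s.*2.+1) | Tn t]|.
Proof.
set A := [pred t : n.-tuple 'I_(s.*2.+1) | Tn t].
pose M := \matrix_(i < #|A|) ket (enum_val i).
have eqM : (\sum_(t | Tn t) <<ket t>> == M)%MS.
  apply/andP; split.
    apply/sumsmx_subP => t Ht; rewrite genmxE.
    have tA : t \in A by [].
    rewrite -(enum_rankK_in tA tA) -(rowK (fun i => ket (enum_val i))); exact: row_sub.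
  apply/row_subP => i; rewrite rowK; apply: (sumsmx_sup (enum_val i)).
    exact: (enum_valP i).
  by rewrite genmxE.
rewrite (eqmx_rank eqM); apply/eqP; rewrite eqn_leq rank_leq_row /=.
have MM : M *m M^T = 1%:M.
  apply/matrixP => i j; rewrite !mxE (bigD1 (enum_rank (enum_val i))) //= big1.
    rewrite !mxE !eqxx /= mul1r addr0.
    by rewrite (inj_eq enum_rank_inj) (inj_eq enum_val_inj).
  move=> k nk; rewrite !mxE /= (negbTE nk) mul0r //.
rewrite -[X in (X <= _)%N](mxrank1 algC) -MM; exact: mxrankM_maxl.
Qed.

Theorem lemma8 (s n : nat) (J : algC) :
  (1 <= s)%N -> (1 <= n)%N -> 0 < J ->
  (exists E, ground_energy (Hop s n J) E) /\
  (forall E, ground_energy (Hop s n J) E ->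
     (eigenspace (Hop s n J) E == \sum_(t | Tn t) <<ket t>>)%MS /\
     \rank (eigenspace (Hop s n J) E) = #|[pred t : n.-tuple 'I_(s.*2.+1) | Tn t]|) /\
  (forall t u : n.-tuple 'I_(s.*2.+1), Tn t -> equiv_str t u -> u = t).
Proof.
move=> s1 n1 J0; split; last split.
- exists 0; split; first exact: eig0.
  by move=> e He; exact: (eig_ge0 _ _ _ _ (ltW J0) He).
- move=> E HE; rewrite (ground0 _ _ _ _ s1 J0 HE).
  have H := eigsp s n J J0; split => //.
  by rewrite (eqmx_rank H) rank_sum.
- by move=> t u; exact: (@part3 s n t u).
Qed.
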